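(* For every hypergraph $H$ with $n\ge1$ vertices, $\mathrm{ch}_{cf}(H)\le\chi_{cf}(H)\cdot\ln n+1$.
   Context: A coloring $C\colon V\to\mathbb Z_{>0}$ of a hypergraph $H=(V,\mathcal E)$ (nonempty hyperedges) is conflict-free if every hyperedge contains a vertex whose color appears exactly once in it. $\chi_{cf}(H)$ is the minimum number of colors in a conflict-free coloring of $H$. $\mathrm{ch}_{cf}(H)$ is the minimum $k$ such that for every family $\{L_v\}_{v\in V}$ of sets of positive integers with $|L_v|\ge k$ there is a conflict-free coloring $C$ with $C(v)\in L_v$ for all $v$. *)

(* Defs.v *)
From mathcomp Require Import all_boot.
From Stdlib Require Import ClassicalEpsilon.
Set Implicit Arguments. Unset Strict Implicit. Unset Printing Implicit Defensive.

Definition hyperedges_nonempty (V : finType) (E : {set {set V}}) : Prop :=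
  forall e, e \in E -> e != set0.

Definition conflict_free (V : finType) (E : {set {set V}}) (C : V -> nat) : Prop :=
  forall e, e \in E ->
    exists2 v, v \in e & forall u, u \in e -> C u = C v -> u = v.

(* Least natural number satisfying P (classically chosen; arbitrary if none). *)
Definition least_nat (P : nat -> Prop) : nat :=
  epsilon (inhabits 0%N) (fun k => P k /\ forall j, P j -> (k <= j)%N).

Definition cf_colorable (V : finType) (E : {set {set V}}) (k : nat) : Prop :=
  exists C : V -> nat, (forall v, 0 < C v <= k)%N /\ conflict_free E C.

Definition chi_cf (V : finType) (E : {set {set V}}) : nat :=
  least_nat (cf_colorable E).

Definition cf_choosable (V : finType) (E : {set {set V}}) (k : nat) : Prop :=
  forall L : V -> seq nat,
    (forall v, uniq (L v) /\ (k <= size (L v))%N /\ all (fun c => 0 < c)%N (L v)) ->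
    exists C : V -> nat, (forall v, C v \in L v) /\ conflict_free E C.

Definition ch_cf (V : finType) (E : {set {set V}}) : nat :=
  least_nat (cf_choosable E).

(* Main.v *)
Require Import Defs.
From mathcomp Require Import all_boot.
From Stdlib Require Import Reals.
From Stdlib Require Import Lra Classical ClassicalEpsilon.

Lemma expn_pow m n : expn m n = Nat.pow m n.
Proof. by elim: n => // n IH; rewrite expnS IH. Qed.

Lemma exp_powR (y : R) (l : nat) : (exp y ^ l = exp (INR l * y))%R.
Proof.
elim: l => [|l IH] /=; first by rewrite Rmult_0_l exp_0.
rewrite IH -exp_plus; congr exp; change (y + INR l * y = INR l.+1 * y)%R; rewrite (S_INR l); ring.
Qed.

Lemma real_part (n k' : nat) : leq 1 n ->
  let l := Z.to_nat (up (INR k'.+1 * ln (INR n))) in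
  leq (muln n (expn k' l)).+1 (expn k'.+1 l) /\ (INR l <= INR k'.+1 * ln (INR n) + 1)%R.
Proof.
move=> hn l.
set x := (INR k'.+1 * ln (INR n))%R.
have n1 : (1 <= INR n)%R by apply: (le_INR 1); apply/leP.
have k1 : (1 <= INR k'.+1)%R by apply: (le_INR 1); apply/leP.
have ln0 : (0 <= ln (INR n))%R.
  case: (Rle_lt_or_eq_dec _ _ n1) => h.
  - rewrite -ln_1; left; apply: ln_increasing => //; lra.
  - by rewrite -h ln_1; lra.
have x0 : (0 <= x)%R by apply: Rmult_le_pos => //; lra.
have [h1 h2] := archimed x.
have up0 : (0 <= up x)%Z by apply: le_0_IZR; lra.
have hl : INR l = IZR (up x) by rewrite INR_IZR_INZ Znat.Z2Nat.id.
split; last by rewrite hl -/x; lra.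
have lpos : leq 1 l by apply/ltP; apply: INR_lt; rewrite hl /=; lra.
case: k' k1 @x @l h1 h2 up0 hl lpos x0 => [|k'] k1 x l h1 h2 up0 hl lpos x0.
  by rewrite exp0n // muln0 expn_gt0.
apply/ltP; apply: INR_lt.
rewrite -multE !expn_pow mult_INR !pow_INR.
set k := INR k'.+2.
have k2 : (2 <= k)%R by apply: (le_INR 2); apply/leP.
have hk1 : INR k'.+1 = (k - 1)%R by rewrite /k (S_INR k'.+1); ring.
rewrite hk1.
have e1 : (k - 1 <= k * exp (- / k))%R.
  have := exp_ineq1_le (- / k).
  have : (k * / k = 1)%R by field; lra.
  move=> kk h; nra.
have e2 : ((k - 1) ^ l <= k ^ l * exp (INR l * - / k))%R.
  rewrite -exp_powR -Rpow_mult_distr; apply: pow_incr; lra.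
have e3 : (exp (INR l * - / k) < / INR n)%R.
  rewrite -(exp_ln (INR n)); last lra.
  rewrite -exp_Ropp; apply: exp_increasing.
  have hx : x = (k * ln (INR n))%R by [].
  have : (ln (INR n) * k < INR l)%R by rewrite hl; lra.
  move=> h.
  have kpos : (0 < / k)%R by apply: Rinv_0_lt_compat; lra.
  have : (ln (INR n) < INR l * / k)%R.
    apply: (Rmult_lt_reg_r k); first lra.
    rewrite Rmult_assoc Rinv_l; lra.
  lra.
have kl : (0 < k ^ l)%R by apply: pow_lt; lra.
have : (INR n * (k ^ l * exp (INR l * - / k)) < INR n * (k ^ l * / INR n))%R.
  apply: Rmult_lt_compat_l; first lra.
  by apply: Rmult_lt_compat_l.
have -> : (INR n * (k ^ l * / INR n) = k ^ l)%R by field; lra.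
move=> h.
apply: Rle_lt_trans h.
apply: Rmult_le_compat_l; lra.
Qed.
From mathcomp Require Import all_boot.

Lemma arith_bound (k' m l N : nat) : l <= m -> m <= N ->
  k'^m * k'.+1^(N - m) * k'.+1^l <= k'^l * k'.+1^N.
Proof.
move=> hlm hmN.
have [d em] : exists d, m = l + d by exists (m - l); rewrite subnKC.
subst m.
have [e eN] : exists e, N = l + d + e by exists (N - (l+d)); rewrite subnKC.
subst N.
rewrite addKn !expnD -!mulnA leq_mul2l; apply/orP; right.
rewrite [X in _ <= X]mulnC -mulnA leq_mul2r; apply/orP; right.
case: d {hlm hmN} => [|d]; first by [].
by rewrite leq_exp2r.
Qed.

Lemma key (V : finType) (E : {set {set V}}) (k' l : nat) (C : V -> nat) :
  (forall v, 0 < C v <= k'.+1) -> conflict_free E C ->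
  #|V| * k'^l < k'.+1^l -> cf_choosable E l.
Proof.
move=> HC Hcf Hn L HL.
set P := undup (flatten [seq L v | v <- enum V]).
have LP : forall v c, c \in L v -> c \in P.
  move=> v c hc; rewrite mem_undup; apply/flatten_mapP; exists v => //.
  by rewrite mem_enum.
have uP : uniq P := undup_uniq _.
pose N := (size P).+1.
pose cls v : 'I_k'.+1 := inord (C v).-1.
pose fat (f : {ffun 'I_N -> 'I_k'.+1}) c := f (inord (index c P)).
pose cond v (x : 'I_N) := (x < size P) && (nth 0 P x \in L v).
pose F v (x : 'I_N) := [pred j : 'I_k'.+1 | ~~ cond v x || (j != cls v)].
have claim1 : exists f : {ffun 'I_N -> 'I_k'.+1}, forall v, f \notin family (F v).
  have hcard v : #|family (F v)| * k'.+1^l <= k'^l * k'.+1^N.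
    rewrite card_family foldrE big_map big_enum /=.
    rewrite (eq_bigr (fun x => if cond v x then k' else k'.+1)); last first.
      move=> x _; case: (cond v x) => /=.
      - transitivity #|predC1 (cls v)|; first by apply: eq_card => j; rewrite !inE.
        by rewrite cardC1 card_ord.
      - transitivity #|'I_k'.+1|; first by apply: eq_card => j; rewrite !inE.
        by rewrite card_ord.
    rewrite (bigID (cond v)) /=.
    rewrite (eq_bigr (fun _ => k')); last by move=> x h; rewrite h.
    rewrite [X in _ * X * _](eq_bigr (fun _ => k'.+1)); last by move=> x /negbTE h; rewrite h.
    rewrite !prod_nat_const.
    have e1 : #|(fun i : 'I_N => ~~ cond v i)| = N - #|(fun i : 'I_N => cond v i)|.
      have hC := cardC (fun i : 'I_N => cond v i); rewrite card_ord in hC.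
      apply: (@addnI #|(fun i : 'I_N => cond v i)|).
      rewrite subnKC; last by have := leq_addr #|[predC (fun i : 'I_N => cond v i)]| #|(fun i : 'I_N => cond v i)|; rewrite hC.
      etransitivity; last exact: hC.
      by congr (_ + _); apply: eq_card => i; rewrite !inE.
    rewrite e1.
    have hsz : size (L v) <= #|(fun i : 'I_N => cond v i)|.
      rewrite cardE -(size_map (fun c => (inord (index c P) : 'I_N))).
      apply: uniq_leq_size.
      - rewrite map_inj_in_uniq; first by case: (HL v).
        move=> a b ha hb /(congr1 val) /=; rewrite !inordK ?ltnS ?index_size // => h.
        by rewrite -(nth_index 0 (LP _ _ ha)) h nth_index // (LP _ _ hb).
      - move=> x /mapP [c hc ->]; rewrite mem_enum -topredE /= /cond inordK ?ltnS ?index_size //.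
        by rewrite index_mem (LP _ _ hc) nth_index // (LP _ _ hc).
    apply: arith_bound; last by have := max_card (fun i : 'I_N => cond v i); rewrite card_ord.
    by apply: leq_trans hsz; case: (HL v) => _ [].
  have : [exists f : {ffun 'I_N -> 'I_k'.+1}, [forall v, f \notin family (F v)]].
    rewrite -[X in is_true X]negbK negb_exists; apply/negP => /forallP hall.
    have sub : [set: {ffun 'I_N -> 'I_k'.+1}] \subset \bigcup_(v : V) [set f | f \in family (F v)].
      apply/subsetP => f _; have := hall f; rewrite negb_forall => /existsP [v hv].
      by apply/bigcupP; exists v => //; rewrite inE; rewrite negbK in hv.
    have h1 := subset_leq_card sub; rewrite cardsT card_ffun !card_ord in h1.
    have h2 : #|\bigcup_(v : V) [set f | f \in family (F v)]| <= \sum_(v : V) #|family (F v)|.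
      apply: (big_ind2 (fun (A : {set {ffun 'I_N -> 'I_k'.+1}}) n => #|A| <= n)).
      - by rewrite cards0.
      - by move=> A1 n1 A2 n2 a b; apply: leq_trans (leq_card_setU _ _) (leq_add a b).
      - by move=> v _; rewrite cardsE.
    have h3 : k'.+1 ^ N * k'.+1 ^ l <= #|V| * (k'^l * k'.+1^N).
      apply: leq_trans (_ : (\sum_(v : V) #|family (F v)|) * k'.+1 ^ l <= _).
        by rewrite leq_mul2r (leq_trans h1 h2) orbT.
      rewrite big_distrl /= -sum_nat_const.
      by apply: leq_sum => v _; apply: hcard.
    have h4 : #|V| * (k'^l * k'.+1^N) < k'.+1 ^ N * k'.+1 ^ l.
      by rewrite mulnA [X in _ < X]mulnC ltn_mul2r Hn expn_gt0.
    by move: (leq_ltn_trans h3 h4); rewrite ltnn.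
  by case/existsP => f /forallP hf; exists f.
have [f Hf] := claim1.
have hasv : forall v, has (fun c => fat f c == cls v) (L v).
  move=> v; have /negP nf := Hf v.
  have /existsP [x hx] : [exists x, f x \notin F v x].
    by rewrite -negb_forall; apply/negP => /forallP h; apply: nf; apply/familyP.
  move: hx; rewrite inE negb_or negbK /cond => /andP [/andP [xs xL] /negPn fx].
  apply/hasP; exists (nth 0 P x) => //.
  rewrite /fat index_uniq //.
  rewrite inord_val.
  by rewrite fx.
pose C' v := nth 0 (L v) (find (fun c => fat f c == cls v) (L v)).
have C'L v : C' v \in L v by rewrite mem_nth // -has_find.
have C'f v : fat f (C' v) = cls v by apply/eqP; exact: (nth_find 0 (hasv v)).
exists C'; split => // e he.
have [v ve hv] := Hcf e he.
exists v => // u ue hu.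
apply: hv => //.
have : cls u = cls v by rewrite -C'f -C'f hu.
move/(congr1 val) => /=; rewrite /cls !inordK.
- move: (HC u) (HC v) => /andP [hu0 _] /andP [hv0 _] h.
  by rewrite -(prednK hu0) -(prednK hv0) h.
- by case/andP: (HC v) => h1 h2; rewrite prednK.
- by case/andP: (HC u) => h1 h2; rewrite prednK.
Qed.
Lemma least_spec (P : nat -> Prop) n : P n -> P (least_nat P) /\ (least_nat P <= n)%N.
Proof.
move=> Pn.
have ex : exists k, P k /\ forall j, P j -> (k <= j)%N.
  elim/ltn_ind: n Pn => n IH Pn.
  case: (classic (exists j, P j /\ (j < n)%N)) => [[j [Pj ltj]]|H].
  - exact: IH j ltj Pj.
  - exists n; split => // j Pj; rewrite leqNgt; apply/negP => ltj; apply: H; exists j; by split.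
have := epsilon_spec (inhabits 0%N) _ ex.
rewrite /least_nat; case=> h1 h2; split => //; exact: h2.
Qed.
From Stdlib Require Import Reals.
Theorem corollary6p3 (V : finType) (E : {set {set V}}) :
  hyperedges_nonempty E -> (1 <= #|V|)%N ->
  (INR (ch_cf E) <= INR (chi_cf E) * ln (INR #|V|) + 1)%R.
Proof.
move=> Hne HV.
have colT : cf_colorable E #|V|.
  exists (fun v => (enum_rank v).+1); split.
  - by move=> v /=; exact: ltn_ord.
  - move=> e he; have /set0Pn [v ve] := Hne e he; exists v => // u _ [h].
    exact: enum_rank_inj (val_inj h).
have [[C [HC Hcf]] _] := least_spec _ _ colT.
rewrite -/(chi_cf E) in HC.
case hk: (chi_cf E) HC => [|k'] HC.
  have /card_gt0P [v0 _] := HV.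
  by have := HC v0; rewrite andbC leqn0 => /andP [/eqP ->].
have [Hn Hl] := real_part _ k' HV.
have hch := key _ _ _ _ _ HC Hcf Hn.
have [_ hle] := least_spec _ _ hch.
rewrite -/(ch_cf E) in hle.
apply: Rle_trans Hl.
by apply: le_INR; apply/leP.
Qed.
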